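(* Let $K$ be a non-commutative division ring, let $R:=K[X,Y]$ be the polynomial ring over $K$ in two independent central indeterminates $X,Y$, and let $a,b\in K$ with $ab-ba\neq 0$. Then the pair $(X+a,-(Y+b))\in R^2$ is unimodular (there exist $x',y'\in R$ with $(X+a)x'-(Y+b)y'=1$) but not admissible (it is not the first row of any invertible $2\times2$ matrix over $R$).
   Context: A pair $(x,y)\in R^2$ is unimodular if $xx'+yy'=1$ for some $x',y'\in R$, and admissible if it is the first row of some invertible $2\times 2$ matrix over $R$. *)

(* Defs.v *)
From HB Require Import structures.
From mathcomp Require Import all_boot all_order all_algebra.
Set Implicit Arguments. Unset Strict Implicit. Unset Printing Implicit Defensive.
Import Order.TTheory GRing.Theory Num.Theory.
Local Open Scope ring_scope.

Definition division_ring (K : unitRingType) : Prop :=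
  forall x : K, x != 0 -> x \is a GRing.unit.

(* K[X,Y] is modelled as {poly {poly K}}: Y is the outer variable 'X,
   X is the inner variable 'X%:P; both are central. *)
Definition varX {K : nzRingType} : {poly {poly K}} := ('X)%:P.
Definition varY {K : nzRingType} : {poly {poly K}} := 'X.
Definition cst2 {K : nzRingType} (a : K) : {poly {poly K}} := (a%:P)%:P.

Definition unimodular (R : nzRingType) (x y : R) : Prop :=
  exists x' y' : R, x * x' + y * y' = 1.

Definition invertible_mx2 (R : nzRingType) (M : 'M[R]_2) : Prop :=
  exists N : 'M[R]_2, M *m N = 1%:M /\ N *m M = 1%:M.

Definition admissible (R : nzRingType) (x y : R) : Prop :=
  exists M : 'M[R]_2, [/\ M 0 0 = x, M 0 1 = y & invertible_mx2 M].

(* Main.v *)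
Require Import Defs.
From HB Require Import structures.
From mathcomp Require Import all_boot all_order all_algebra.
From mathcomp Require Import zify.
Import GRing.Theory.
Local Open Scope ring_scope.


Definition nzd (R : nzRingType) := forall x y : R, x != 0 -> y != 0 -> x * y != 0.

Lemma nzd_div (K : unitRingType) : division_ring K -> nzd K.
Proof.
move=> hK x y hx hy; apply/eqP => hxy; move/eqP: hy; apply.
by rewrite -(mulKr (hK x hx) y) hxy mulr0.
Qed.

Lemma nzd_poly (R : nzRingType) : nzd R -> nzd {poly R}.
Proof.
move=> h p q hp hq.
have hl : lead_coef p * lead_coef q != 0 by apply: h; rewrite lead_coef_eq0.
by rewrite -lead_coef_eq0 lead_coef_proper_mul.
Qed.

Lemma size_le_mul (R : nzRingType) : nzd R ->
  forall p t : {poly R}, t != 0 -> (size p <= size (p * t)%R)%N.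
Proof.
move=> h p t ht; have [->|hp] := eqVneq p 0%R; first by rewrite size_poly0.
rewrite size_proper_mul; last by apply: h; rewrite lead_coef_eq0.
have : (0 < size t)%N by rewrite size_poly_gt0.
lia.
Qed.

Lemma zmod_aux (V : zmodType) (u v w t t' : V) :
  u + v + w + t - (u + w + v + t') = t - t'.
Proof. by rewrite [u + w + v]addrAC [u+v+w+t]addrC addrKA. Qed.

Section Aux.
Variable K : nzRingType.
Local Notation R := {poly {poly K}}.

Lemma varY_comm (p : R) : varY * p = p * varY.
Proof. by rewrite /varY (commr_polyX p). Qed.

Lemma varX_cst2 (a : K) : varX * cst2 a = cst2 a * (varX : R).
Proof. by rewrite /varX /cst2 -!polyCM (commr_polyX a%:P). Qed.

Lemma cst2M (a b : K) : cst2 (a * b) = cst2 a * (cst2 b : R).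
Proof. by rewrite /cst2 !polyCM. Qed.

Lemma cst2B (a b : K) : cst2 (a - b) = cst2 a - (cst2 b : R).
Proof. by rewrite /cst2 !polyCB. Qed.

Lemma comm_id (a b : K) :
  (varX + cst2 a) * (varY + cst2 b) - (varY + cst2 b) * (varX + cst2 a)
  = cst2 (a * b - b * a) :> R.
Proof.
rewrite !mulrDl !mulrDr !addrA (varY_comm varX) (varY_comm (cst2 a)).
rewrite -(varX_cst2 b) zmod_aux cst2B !cst2M //.
Qed.
End Aux.


Lemma coef_eq (K : nzRingType) (a b : K) (q s : {poly {poly K}}) i j :
  (((varX + cst2 a) * q + (-(varY + cst2 b)) * s)`_i)`_j =
  (if j is j'.+1 then (q`_i)`_j' else 0) + a * (q`_i)`_j
  - ((if i is i'.+1 then (s`_i')`_j else 0) + b * (s`_i)`_j).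
Proof.
rewrite mulNr !mulrDl !coefD !coefN /varX /varY /cst2 !coefCM coefXM.
rewrite !coefD ?coefN coefXM !coefCM.
by case: i => [|i]; case: j => [|j]; rewrite /= ?coef0 ?add0r.
Qed.

Lemma kernel_small (K : unitRingType) (hK : division_ring K) (a b : K)
  (hab : a * b - b * a != 0) (q s : {poly {poly K}}) :
  (varX + cst2 a) * q + (-(varY + cst2 b)) * s = 0 ->
  (size q <= 2)%N -> (size s <= 2)%N ->
  (size (swapXY q) <= 2)%N -> (size (swapXY s) <= 2)%N -> q = 0 /\ s = 0.
Proof.
move=> E hq hs hq' hs'.
have E' i j : 0 = (if j is j'.+1 then (q`_i)`_j' else 0) + a * (q`_i)`_j
  - ((if i is i'.+1 then (s`_i')`_j else 0) + b * (s`_i)`_j).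
  by rewrite -(@coef_eq _ a b q s i j) E !coef0.
have Zq i j : (2 <= i)%N \/ (2 <= j)%N -> (q`_i)`_j = 0.
  case=> h.
    have -> : q`_i = 0 by apply: nth_default; exact: leq_trans hq h.
    by rewrite coef0.
  rewrite -(coef_swapXY q j i).
  have -> : (swapXY q)`_j = 0 by apply: nth_default; exact: leq_trans hq' h.
  by rewrite coef0.
have Zs i j : (2 <= i)%N \/ (2 <= j)%N -> (s`_i)`_j = 0.
  case=> h.
    have -> : s`_i = 0 by apply: nth_default; exact: leq_trans hs h.
    by rewrite coef0.
  rewrite -(coef_swapXY s j i).
  have -> : (swapXY s)`_j = 0 by apply: nth_default; exact: leq_trans hs' h.
  by rewrite coef0.
have e02 := E' 0%N 2%N; have e12 := E' 1%N 2%N; have e20 := E' 2%N 0%N.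
have e21 := E' 2%N 1%N; have e11 := E' 1%N 1%N; have e01 := E' 0%N 1%N.
have e10 := E' 1%N 0%N; have e00 := E' 0%N 0%N.
have q02 : q`_0`_2 = 0 by apply: Zq; right.
have q12 : q`_1`_2 = 0 by apply: Zq; right.
have q20 : q`_2`_0 = 0 by apply: Zq; left.
have q21 : q`_2`_1 = 0 by apply: Zq; left.
have s02 : s`_0`_2 = 0 by apply: Zs; right.
have s12 : s`_1`_2 = 0 by apply: Zs; right.
have s20 : s`_2`_0 = 0 by apply: Zs; left.
have s21 : s`_2`_1 = 0 by apply: Zs; left.
rewrite /= ?q02 ?q12 ?q20 ?q21 ?s02 ?s12 ?s20 ?s21 ?mulr0 ?addr0 ?add0r ?subr0 ?sub0r in e02 e12 e20 e21.
have s10 : s`_1`_0 = 0 by apply/eqP; rewrite -oppr_eq0 -e20.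
have s11 : s`_1`_1 = 0 by apply/eqP; rewrite -oppr_eq0 -e21.
rewrite -?e02 -?e12 ?s10 ?s11 ?mulr0 ?addr0 ?add0r ?subr0 ?sub0r in e11 e01 e10 e00.
move/eqP: e11; rewrite eq_sym subr_eq0 => /eqP e11.
move/eqP: e01; rewrite eq_sym subr_eq0 => /eqP e01.
move/eqP: e10; rewrite eq_sym subr_eq0 => /eqP e10.
rewrite e01 -e10 e11 !mulrA -mulrBl in e00.
have s01 : s`_0`_1 = 0.
  by rewrite -(mulKr (hK _ hab) (s`_0`_1)) -e00 mulr0.
have Q : forall i j, (q`_i)`_j = 0.
  move=> [|[|i]] [|[|j]]; rewrite ?e01 ?e11 ?s01 ?mulr0 //; apply: Zq; lia.
have S : forall i j, (s`_i)`_j = 0.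
  move=> [|[|i]] [|[|j]]; rewrite -?e10 ?e11 ?s01 ?mulr0 //; apply: Zs; lia.
split; apply/polyP => i; apply/polyP => j; by rewrite !coef0.
Qed.

Lemma mul2E (R : nzRingType) (A B : 'M[R]_2) i j :
  (A *m B) i j = A i 0 * B 0 j + A i 1 * B 1 j.
Proof.
rewrite mxE big_ord_recr big_ord1 /=.
have -> : widen_ord (leqnSn 1) ord0 = 0 :> 'I_2 by apply: val_inj.
by have -> : ord_max = 1 :> 'I_2 by apply: val_inj.
Qed.

Lemma kern (R : nzRingType) (x y x' y' : R) : x * x' + y * y' = 1 ->
  x * (1 - x' * x) + y * (- (y' * x)) = 0 /\
  x * (- (x' * y)) + y * (1 - y' * y) = 0.
Proof.
move=> hu; split.
  by rewrite mulrBr mulr1 mulrN !mulrA -addrA -opprD -mulrDl hu mul1r subrr.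
by rewrite mulrN mulrBr mulr1 !mulrA addrCA -opprD -mulrDl hu mul1r subrr.
Qed.

Section Sw.
Variable K : nzRingType.
Lemma sw_varX : swapXY (varX : {poly {poly K}}) = varY.
Proof. by rewrite /varX swapXY_polyC map_polyX. Qed.
Lemma sw_varY : swapXY (varY : {poly {poly K}}) = varX.
Proof. by rewrite /varY swapXY_X. Qed.
Lemma sw_cst2 (d : K) : swapXY (cst2 d : {poly {poly K}}) = cst2 d.
Proof. by rewrite /cst2 swapXY_polyC map_polyC. Qed.
Lemma swM (p r : {poly {poly K}}) : swapXY (p * r) = swapXY p * swapXY r.
Proof. exact: rmorphM. Qed.
Lemma swD (p r : {poly {poly K}}) : swapXY (p + r) = swapXY p + swapXY r.
Proof. exact: raddfD. Qed.
Lemma swB (p r : {poly {poly K}}) : swapXY (p - r) = swapXY p - swapXY r.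
Proof. exact: raddfB. Qed.
Lemma swN (p : {poly {poly K}}) : swapXY (- p) = - swapXY p.
Proof. exact: raddfN. Qed.
Lemma sw1 : swapXY (1 : {poly {poly K}}) = 1.
Proof. exact: rmorph1. Qed.
Lemma sz_mul1 (p r : {poly {poly K}}) m :
  (size p <= m)%N -> (size r <= 1)%N -> (size (p * r)%R <= m)%N.
Proof. move=> h1 h2; move: (size_polyMleq p r) h1 h2; move: (size (p * r)%R) (size p) (size r) => u v w'; lia. Qed.
Lemma sz_1B (p : {poly {poly K}}) :
  (size p <= 2)%N -> (size (1 - p)%R <= 2)%N.
Proof.
by move=> h; apply: leq_trans (size_polyD _ _) _; rewrite size_polyN size_poly1 geq_max h.
Qed.
Lemma sz_XC (d : K) : (size ((varX + cst2 d)%R : {poly {poly K}}) <= 1)%N.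
Proof. by rewrite /varX /cst2 -polyCD size_polyC_leq1. Qed.
Lemma sz_YC (d : K) : (size ((varY + cst2 d)%R : {poly {poly K}}) <= 2)%N.
Proof. by rewrite /varY /cst2 size_XaddC. Qed.
Lemma sz_C (d : K) : (size (cst2 d : {poly {poly K}}) <= 1)%N.
Proof. exact: size_polyC_leq1. Qed.
End Sw.

Theorem mainTheorem7 (K : unitRingType) (hK : division_ring K)
  (hnc : exists u v : K, u * v != v * u)
  (a b : K) (hab : a * b - b * a != 0) :
  unimodular (varX + cst2 a) (- (varY + cst2 b)) /\
  ~ admissible (varX + cst2 a) (- (varY + cst2 b)).
Proof.
set c := a * b - b * a.
set x := varX + cst2 a; set y := - (varY + cst2 b).
set C : {poly {poly K}} := cst2 c^-1.
set x' := (varY + cst2 b) * C; set y' := x * C.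
have hu : x * x' + y * y' = 1.
  rewrite /x' /y' !mulrA !mulNr -mulrBl comm_id -cst2M mulrV ?hK //.
split; first by exists x', y'.
case=> M [M00 M01 [N [MN NM]]].
set z := M 1 0; set w := M 1 1; set q := N 0 1; set s := N 1 1.
have mn01 : x * q + y * s = 0.
  by have := congr1 (fun A : 'M[{poly {poly K}}]_2 => A 0 1) MN; rewrite mul2E M00 M01 !mxE.
have mn11 : z * q + w * s = 1.
  by have := congr1 (fun A : 'M[{poly {poly K}}]_2 => A 1 1) MN; rewrite mul2E !mxE.
have nm00 : N 0 0 * x + q * z = 1.
  by have := congr1 (fun A : 'M[{poly {poly K}}]_2 => A 0 0) NM; rewrite mul2E M00 !mxE.
have nm01 : N 0 0 * y + q * w = 0.
  by have := congr1 (fun A : 'M[{poly {poly K}}]_2 => A 0 1) NM; rewrite mul2E M01 !mxE.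
have nm10 : N 1 0 * x + s * z = 0.
  by have := congr1 (fun A : 'M[{poly {poly K}}]_2 => A 1 0) NM; rewrite mul2E M00 !mxE.
have nm11 : N 1 0 * y + s * w = 1.
  by have := congr1 (fun A : 'M[{poly {poly K}}]_2 => A 1 1) NM; rewrite mul2E M01 !mxE.
have key f g : x * f + y * g = 0 ->
    f = q * (z * f + w * g) /\ g = s * (z * f + w * g).
  move=> hfg; split; rewrite mulrDr !mulrA.
    have -> : q * z = 1 - N 0 0 * x by rewrite -nm00 [N 0 0 * x + _]addrC addrK.
    have -> : q * w = - (N 0 0 * y) by apply/eqP; rewrite -addr_eq0 addrC nm01.
    rewrite mulrBl mul1r mulNr -!mulrA -addrA -opprD -mulrDr hfg mulr0 subr0 //.
  have -> : s * w = 1 - N 1 0 * y by rewrite -nm11 [N 1 0 * y + _]addrC addrK.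
  have -> : s * z = - (N 1 0 * x) by apply/eqP; rewrite -addr_eq0 addrC nm10.
  rewrite mulrBl mul1r mulNr -!mulrA addrCA -opprD -mulrDr hfg mulr0 subr0 //.
set f1 := 1 - x' * x; set g1 := - (y' * x).
set f2 := - (x' * y); set g2 := 1 - y' * y.
have [k1 k2] := @kern _ x y x' y' hu.
have nzP : nzd {poly K} := @nzd_poly _ (@nzd_div _ hK).
have nzX d : (varX + cst2 d) * C * (varX + cst2 d) != 0.
  rewrite /varX /C /cst2 -!polyCD -!polyCM polyC_eq0.
  apply: (nzP); last by rewrite -size_poly_eq0 size_XaddC.
  apply: (nzP); first by rewrite -size_poly_eq0 size_XaddC.
  by rewrite polyC_eq0 invr_eq0.
have g1nz : g1 != 0 by rewrite /g1 oppr_eq0 /y' nzX.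
have sf2 : swapXY f2 = (varX + cst2 b) * C * (varX + cst2 b).
  rewrite /f2 /x' /y swN !swM swN !swD sw_varY !sw_cst2.
  by rewrite mulrN opprK.
have f2nz : f2 != 0.
  by apply: contra (nzX b) => /eqP h; rewrite -sf2 h raddf0.
have szf1 : (size f1 <= 2)%N.
  by apply: sz_1B; apply: sz_mul1 (sz_XC _ _); apply: sz_mul1 (sz_YC _ _) (sz_C _ _).
have szg1 : (size g1 <= 2)%N.
  rewrite size_polyN; apply: sz_mul1 (sz_XC _ _); apply: sz_mul1 (sz_C _ _).
  by apply: leq_trans (sz_XC _ _) _.
have szf2 : (size (swapXY f2) <= 2)%N.
  rewrite sf2; apply: sz_mul1 (sz_XC _ _); apply: sz_mul1 (sz_C _ _).
  by apply: leq_trans (sz_XC _ _) _.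
have szg2 : (size (swapXY g2) <= 2)%N.
  rewrite /g2 /y' /y /x swB sw1 !swM swN !swD.
  rewrite sw_varX sw_varY !sw_cst2 mulrN.
  apply: sz_1B; rewrite size_polyN; apply: sz_mul1 (sz_XC _ _).
  by apply: sz_mul1 (sz_YC _ _) (sz_C _ _).
have [ef1 eg1] := key f1 g1 k1.
have [ef2 eg2] := key f2 g2 k2.
set t1 := z * f1 + w * g1 in ef1 eg1.
set t2 := z * f2 + w * g2 in ef2 eg2.
have t1nz : t1 != 0 by apply: contra g1nz => /eqP h; rewrite eg1 h mulr0.
have t2nz : t2 != 0 by apply: contra f2nz => /eqP h; rewrite ef2 h mulr0.
have st2nz : swapXY t2 != 0 by rewrite swapXY_eq0.
have hq : (size q <= 2)%N.
  by have := @size_le_mul _ nzP q t1 t1nz; rewrite -ef1 => h; exact: leq_trans h szf1.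
have hs : (size s <= 2)%N.
  by have := @size_le_mul _ nzP s t1 t1nz; rewrite -eg1 => h; exact: leq_trans h szg1.
have hq' : (size (swapXY q) <= 2)%N.
  have := @size_le_mul _ nzP (swapXY q) _ st2nz; rewrite -swM -ef2 => h.
  exact: leq_trans h szf2.
have hs' : (size (swapXY s) <= 2)%N.
  have := @size_le_mul _ nzP (swapXY s) _ st2nz; rewrite -swM -eg2 => h.
  exact: leq_trans h szg2.
have [q0 s0] := @kernel_small K hK a b hab q s mn01 hq hs hq' hs'.
by move: mn11; rewrite q0 s0 !mulr0 addr0 => /eqP; rewrite eq_sym oner_eq0.
Qed.
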